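(* Let $|\psi_{{\sf A}{\sf B}}\rangle\in\mathbb C^{d_{\sf A}}\otimes\mathbb C^{d_{\sf B}}$ be a unit vector, $\rho_{\sf A}=\mathrm{tr}_{\sf B}(|\psi_{{\sf A}{\sf B}}\rangle\langle\psi_{{\sf A}{\sf B}}|)$, and $\bar\omega_{\sf A}=\mathrm{tr}_{\sf B}\big(S_{\sf B}|\psi_{{\sf A}{\sf B}}\rangle\langle\psi_{{\sf A}{\sf B}}|^{\otimes2}\big)+\frac{S_{\sf A}}{\mathrm{tr}S_{\sf A}}\,\mathrm{tr}\big(A_{\sf A}A_{\sf B}|\psi_{{\sf A}{\sf B}}\rangle\langle\psi_{{\sf A}{\sf B}}|^{\otimes2}\big)$. Then $\bar\omega_{\sf A}=S_{\sf A}(\rho_{\sf A}\otimes\rho_{\sf A})S_{\sf A}+\big(1-\mathrm{tr}(S_{\sf A}(\rho_{\sf A}\otimes\rho_{\sf A})S_{\sf A})\big)\tilde S_{\sf A}$.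
   Context: $|\psi_{{\sf A}{\sf B}}\rangle^{\otimes2}$ is regarded as a vector in $\mathbb C^{d_{\sf A}}_1\otimes\mathbb C^{d_{\sf B}}_2\otimes\mathbb C^{d_{\sf A}}_3\otimes\mathbb C^{d_{\sf B}}_4$; $\mathrm{tr}_{\sf B}$ is the partial trace over factors $2,4$. $S_{\sf A}$, $A_{\sf A}$ are the projectors onto the symmetric and antisymmetric subspaces of $\mathbb C^{d_{\sf A}}_1\otimes\mathbb C^{d_{\sf A}}_3$; $S_{\sf B}$, $A_{\sf B}$ those of $\mathbb C^{d_{\sf B}}_2\otimes\mathbb C^{d_{\sf B}}_4$ (extended by identities where needed); $\tilde S_{\sf A}=S_{\sf A}/\mathrm{tr}S_{\sf A}$. *)

(* Defs.v *)
From HB Require Import structures.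
From mathcomp Require Import all_boot all_order all_algebra.
Import Order.TTheory GRing.Theory Num.Theory.
Local Open Scope ring_scope.

(* Finite-dimensional linear algebra over C (a numeric closed field, e.g. the
   complex numbers).  The Hilbert space C^T has the orthonormal basis indexed by
   a finType T; an operator on it is given by its matrix  T -> T -> C.
   Tensor products C^T1 (x) C^T2 = C^(T1*T2). *)

Definition op (C : numClosedFieldType) (T : finType) := T -> T -> C.

Section Ops.
Variable C : numClosedFieldType.
Implicit Types T : finType.

Definition idop T : op C T := fun i j => (i == j)%:R.
Definition addo T (A B : op C T) : op C T := fun i j => A i j + B i j.
Definition scaleo T (c : C) (A : op C T) : op C T := fun i j => c * A i j.
Definition mulo T (A B : op C T) : op C T :=
  fun i j => \sum_(k : T) A i k * B k j.
Definition tro T (A : op C T) : C := \sum_(i : T) A i i.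

Definition tens T1 T2 (A : op C T1) (B : op C T2) : op C (prod T1 T2) :=
  fun i j => A i.1 j.1 * B i.2 j.2.
Definition tensv T1 T2 (u : T1 -> C) (v : T2 -> C) : prod T1 T2 -> C :=
  fun i => u i.1 * v i.2.

Definition ketbra T (u : T -> C) : op C T := fun i j => u i * (u j)^*.

Definition ptr2 T1 T2 (M : op C (prod T1 T2)) : op C T1 :=
  fun i j => \sum_(k : T2) M (i, k) (j, k).

Definition swapo T : op C (prod T T) :=
  fun i j => ((i.1 == j.2) && (i.2 == j.1))%:R.
Definition symP T : op C (prod T T) :=
  scaleo _ (2^-1) (addo _ (idop (prod T T)) (swapo T)).
Definition antP T : op C (prod T T) :=
  scaleo _ (2^-1) (addo _ (idop (prod T T)) (scaleo _ (-1) (swapo T))).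

(* The space C^dA_1 (x) C^dB_2 (x) C^dA_3 (x) C^dB_4 is indexed by
   (TA * TB) * (TA * TB).  [regroup] reorders into (factors 1,3) * (factors 2,4). *)
Definition regroup (TA TB : finType) (x : prod (prod TA TB) (prod TA TB)) :
  prod (prod TA TA) (prod TB TB) := ((x.1.1, x.2.1), (x.1.2, x.2.2)).
Definition ungroup (TA TB : finType) (y : prod (prod TA TA) (prod TB TB)) :
  prod (prod TA TB) (prod TA TB) := ((y.1.1, y.2.1), (y.1.2, y.2.2)).

(* an operator on (1,3) (x) (2,4), viewed as an operator on 1 (x) 2 (x) 3 (x) 4 *)
Definition liftAB (TA TB : finType) (K : op C (prod (prod TA TA) (prod TB TB))) :
  op C (prod (prod TA TB) (prod TA TB)) := fun x y => K (regroup TA TB x) (regroup TA TB y).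
(* partial trace tr_B over factors 2,4, giving an operator on factors 1,3 *)
Definition ptrB (TA TB : finType) (M : op C (prod (prod TA TB) (prod TA TB))) :
  op C (prod TA TA) := ptr2 _ _ (fun x y => M (ungroup TA TB x) (ungroup TA TB y)).

(* S_A, A_A (on factors 1,3) and S_B, A_B (on factors 2,4), each extended by
   the identity on the remaining factors *)
Definition SAx (TA TB : finType) := liftAB TA TB (tens _ _ (symP TA) (idop (prod TB TB))).
Definition AAx (TA TB : finType) := liftAB TA TB (tens _ _ (antP TA) (idop (prod TB TB))).
Definition SBx (TA TB : finType) := liftAB TA TB (tens _ _ (idop (prod TA TA)) (symP TB)).
Definition ABx (TA TB : finType) := liftAB TA TB (tens _ _ (idop (prod TA TA)) (antP TB)).

End Ops.

(* Main.v *)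
Require Import Defs.
From HB Require Import structures.
From mathcomp Require Import all_boot all_order all_algebra.
From mathcomp Require Import ring.
From Stdlib Require Import FunctionalExtensionality.
Import Order.TTheory GRing.Theory Num.Theory.
Local Open Scope ring_scope.

Section H.
Variable C : numClosedFieldType.

Lemma sum_delta (T : finType) (j : T) (F : T -> C) :
  \sum_i (j == i)%:R * F i = F j.
Proof.
rewrite (bigD1 j) //= eqxx mul1r big1 ?addr0 // => i.
by rewrite eq_sym => /negbTE ->; rewrite mul0r.
Qed.

Lemma sum_deltac (T : finType) (j : T) (c : C) (F : T -> C) :
  \sum_i c * (j == i)%:R * F i = c * F j.
Proof. by rewrite -(@sum_delta _ j F) big_distrr; apply: eq_bigr => i _; rewrite -mulrA. Qed.

Lemma sum_delta2 (T : finType) (u1 u2 : T) (c1 c2 : C) (F : T -> C) :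
  \sum_i (c1 * (u1 == i)%:R + c2 * (u2 == i)%:R) * F i = c1 * F u1 + c2 * F u2.
Proof. by rewrite -(@sum_deltac _ u1 _ F) -(@sum_deltac _ u2 _ F) -big_split; apply: eq_bigr => i _; rewrite mulrDl. Qed.

Lemma sum_delta4 (T : finType) (u1 u2 u3 u4 : T) (c1 c2 c3 c4 : C) (F : T -> C) :
  \sum_i (c1 * (u1 == i)%:R + c2 * (u2 == i)%:R + c3 * (u3 == i)%:R + c4 * (u4 == i)%:R) * F i
  = c1 * F u1 + c2 * F u2 + c3 * F u3 + c4 * F u4.
Proof. by rewrite -(@sum_deltac _ u1 _ F) -(@sum_deltac _ u2 _ F) -(@sum_deltac _ u3 _ F) -(@sum_deltac _ u4 _ F) -!big_split; apply: eq_bigr => i _; rewrite !mulrDl. Qed.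

Lemma sum_pair (T1 T2 : finType) (F : T1 * T2 -> C) :
  \sum_x F x = \sum_i \sum_j F (i, j).
Proof. by rewrite pair_big; apply: eq_bigr => -[]. Qed.

Lemma eq_pairR (T1 T2 : finType) (a a' : T1) (b b' : T2) :
  (((a, b) == (a', b')) %:R : C) = (a == a')%:R * (b == b')%:R.
Proof. by rewrite xpair_eqE -natrM mulnb. Qed.

Lemma andR (a b : bool) : ((a && b)%:R : C) = a%:R * b%:R.
Proof. by rewrite -natrM mulnb. Qed.

Variables TA TB : finType.
Notation T4 := (prod (prod TA TB) (prod TA TB)).
Definition swA (x : T4) : T4 := ((x.2.1, x.1.2), (x.1.1, x.2.2)).
Definition swB (x : T4) : T4 := ((x.1.1, x.2.2), (x.2.1, x.1.2)).

Lemma SBxE (x z : T4) : SBx C TA TB x z =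
  2^-1 * (x == z)%:R + 2^-1 * (swB x == z)%:R.
Proof.
case: x => [[a1 b1] [a3 b3]]; case: z => [[c1 d1] [c3 d3]].
rewrite /SBx /liftAB /tens /regroup /symP /scaleo /addo /swapo /idop /swB /=.
rewrite !eq_pairR ?andR. ring.
Qed.

Lemma AAxE (x z : T4) : AAx C TA TB x z =
  2^-1 * (x == z)%:R + (- 2^-1) * (swA x == z)%:R.
Proof.
case: x => [[a1 b1] [a3 b3]]; case: z => [[c1 d1] [c3 d3]].
rewrite /AAx /liftAB /tens /regroup /antP /scaleo /addo /swapo /idop /swA /=.
rewrite !eq_pairR ?andR. ring.
Qed.

Lemma ABxE (x z : T4) : ABx C TA TB x z =
  2^-1 * (x == z)%:R + (- 2^-1) * (swB x == z)%:R.
Proof.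
case: x => [[a1 b1] [a3 b3]]; case: z => [[c1 d1] [c3 d3]].
rewrite /ABx /liftAB /tens /regroup /antP /scaleo /addo /swapo /idop /swB /=.
rewrite !eq_pairR ?andR. ring.
Qed.

Lemma AABxE (x z : T4) : mulo C _ (AAx C TA TB) (ABx C TA TB) x z =
  4^-1 * (x == z)%:R + (- 4^-1) * (swB x == z)%:R
  + (- 4^-1) * (swA x == z)%:R + 4^-1 * (swB (swA x) == z)%:R.
Proof.
rewrite /mulo.
under eq_bigr => w _ do rewrite AAxE.
rewrite sum_delta2 !ABxE.
have -> : (4^-1 : C) = 2^-1 * 2^-1 by rewrite -invfM; congr (_^-1); ring.
ring.
Qed.


Lemma prod_sums (I J : finType) (f : I -> C) (g : J -> C) :
  (\sum_i f i) * (\sum_j g j) = \sum_i \sum_j f i * g j.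
Proof. rewrite big_distrl; apply: eq_bigr => i _; by rewrite big_distrr. Qed.

Lemma sum4 (F : T4 -> C) :
  \sum_x F x = \sum_a1 \sum_a3 \sum_b1 \sum_b3 F ((a1, b1), (a3, b3)).
Proof.
rewrite sum_pair sum_pair; apply: eq_bigr => a1 _.
rewrite exchange_big /= sum_pair; apply: eq_bigr => a3 _.
by rewrite exchange_big.
Qed.

Lemma symPE (T : finType) (x z : T * T) : symP C T x z =
  2^-1 * (x == z)%:R + 2^-1 * ((x.2, x.1) == z)%:R.
Proof.
case: x => a b; case: z => c d.
rewrite /symP /scaleo /addo /swapo /idop /= !eq_pairR ?andR; ring.
Qed.

Lemma symPE' (T : finType) (x z : T * T) : symP C T z x =
  2^-1 * (x == z)%:R + 2^-1 * ((x.2, x.1) == z)%:R.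
Proof.
case: x => a b; case: z => c d.
rewrite /symP /scaleo /addo /swapo /idop /= !eq_pairR ?andR.
rewrite (eq_sym c) (eq_sym d) (eq_sym a d) (eq_sym b c); ring.
Qed.

Lemma mulo_symPl (T : finType) (M : op C (prod T T)) x y :
  mulo C _ (symP C T) M x y = 2^-1 * M x y + 2^-1 * M (x.2, x.1) y.
Proof.
rewrite /mulo; under eq_bigr => z _ do rewrite symPE.
by rewrite sum_delta2.
Qed.

Lemma mulo_symPr (T : finType) (M : op C (prod T T)) x y :
  mulo C _ M (symP C T) x y = 2^-1 * M x y + 2^-1 * M x (y.2, y.1).
Proof.
rewrite /mulo; under eq_bigr => z _ do rewrite symPE' mulrC.
by rewrite sum_delta2.
Qed.

Lemma mulo_SBx (M : op C T4) x y :
  mulo C _ (SBx C TA TB) M x y = 2^-1 * M x y + 2^-1 * M (swB x) y.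
Proof.
rewrite /mulo; under eq_bigr => z _ do rewrite SBxE.
by rewrite sum_delta2.
Qed.

Lemma mulo_AAB (M : op C T4) x y :
  mulo C _ (mulo C _ (AAx C TA TB) (ABx C TA TB)) M x y =
  4^-1 * M x y + (- 4^-1) * M (swB x) y + (- 4^-1) * M (swA x) y
  + 4^-1 * M (swB (swA x)) y.
Proof.
rewrite {1}/mulo; under eq_bigr => z _ do rewrite AABxE.
by rewrite sum_delta4.
Qed.

End H.

Theorem mainTheorem9 (C : numClosedFieldType) (dA dB : nat)
    (psi : prod 'I_dA 'I_dB -> C) :
  \sum_(x : prod 'I_dA 'I_dB) `|psi x| ^+ 2 = 1 ->
  let rhoA : op C 'I_dA := ptr2 C _ _ (ketbra C _ psi) in
  let X : op C (prod (prod 'I_dA 'I_dB) (prod 'I_dA 'I_dB)) :=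
    ketbra C _ (tensv C _ _ psi psi) in
  let SA : op C (prod 'I_dA 'I_dA) := symP C 'I_dA in
  let tSA : op C (prod 'I_dA 'I_dA) := scaleo C _ (tro C _ SA)^-1 SA in
  let omegaA : op C (prod 'I_dA 'I_dA) :=
    addo C _ (ptrB C _ _ (mulo C _ (SBx C 'I_dA 'I_dB) X))
         (scaleo C _ (tro C _ (mulo C _ (mulo C _ (AAx C 'I_dA 'I_dB) (ABx C 'I_dA 'I_dB)) X)) tSA) in
  let SrrS : op C (prod 'I_dA 'I_dA) := mulo C _ (mulo C _ SA (tens C _ _ rhoA rhoA)) SA in
  omegaA = addo C _ SrrS (scaleo C _ (1 - tro C _ SrrS) tSA).
Proof.
move=> hn rhoA X SA tSA omegaA SrrS.
pose r := rhoA.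
have rE a a' : r a a' = \sum_b psi (a, b) * (psi (a', b))^* by [].
have N1 : \sum_a r a a = 1.
  rewrite -hn sum_pair; apply: eq_bigr => a _; apply: eq_bigr => b _.
  by rewrite normCK.
have F1 x y : SrrS x y = 2^-1 * (r x.1 y.1 * r x.2 y.2 + r x.2 y.1 * r x.1 y.2).
  rewrite /SrrS /SA mulo_symPr !mulo_symPl.
  case: x => a1 a2; case: y => c1 c2.
  rewrite /tens /r /=; by field.
have F2 x y : ptrB C _ _ (mulo C _ (SBx C 'I_dA 'I_dB) X) x y =
    2^-1 * (r x.1 y.1 * r x.2 y.2 + r x.2 y.1 * r x.1 y.2).
  case: x => i1 i2; case: y => j1 j2.
  rewrite /ptrB /ptr2 /=.
  under eq_bigr => k _ do rewrite mulo_SBx.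
  rewrite sum_pair !rE !prod_sums -big_split /= big_distrr; apply: eq_bigr => k1 _.
  rewrite -big_split big_distrr; apply: eq_bigr => k2 _ /=.
  rewrite /X /ketbra /tensv /swB /ungroup /= !rmorphM; ring.
have F3 : tro C _ (mulo C _ (mulo C _ (AAx C 'I_dA 'I_dB) (ABx C 'I_dA 'I_dB)) X) =
    2^-1 * ((\sum_a r a a) * (\sum_a r a a) - \sum_a \sum_a' r a' a * r a a').
  rewrite /tro; under eq_bigr => x _ do rewrite mulo_AAB.
  rewrite sum4 prod_sums -sumrB big_distrr; apply: eq_bigr => a1 _.
  rewrite -sumrB big_distrr; apply: eq_bigr => a3 _.
  rewrite !rE !prod_sums -sumrB big_distrr; apply: eq_bigr => b1 _.
  rewrite -sumrB big_distrr; apply: eq_bigr => b3 _.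
  rewrite /X /ketbra /tensv /swB /swA /= !rmorphM; by field.
have F4 : tro C _ SrrS =
    2^-1 * ((\sum_a r a a) * (\sum_a r a a) + \sum_a \sum_a' r a' a * r a a').
  rewrite /tro; under eq_bigr => x _ do rewrite F1.
  rewrite sum_pair prod_sums -big_split big_distrr; apply: eq_bigr => a1 _.
  rewrite -big_split big_distrr; apply: eq_bigr => a3 _ /=; ring.
apply: functional_extensionality => x; apply: functional_extensionality => y.
rewrite /omegaA /addo /scaleo F4 F2 F1 F3 N1.
by field.
Qed.
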